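(* Let $R$ be a commutative ring, $S$ a multiplicative subset of $R$ and $\Phi:0\to M\xrightarrow{f}N\xrightarrow{g}L\to 0$ a $u$-$S$-exact sequence of $R$-modules. Then: (1) the class of $u$-$S$-coherent modules is closed under $u$-$S$-isomorphisms; (2) if $L$ is $u$-$S$-coherent, then $M$ is $u$-$S$-coherent if and only if $N$ is $u$-$S$-coherent; (3) any finite direct sum of $u$-$S$-coherent modules is $u$-$S$-coherent; (4) if $N$ is $u$-$S$-coherent and $M$ is $S$-finite, then $L$ is $u$-$S$-coherent.
   Context: A multiplicative subset $S$ contains $1$ and is closed under products. A sequence $A\xrightarrow{f}B\xrightarrow{g}C$ is $u$-$S$-exact at $B$ if there is $s\in S$ with $s\,\mathrm{Ker}(g)\subseteq\mathrm{Im}(f)$ and $s\,\mathrm{Im}(f)\subseteq\mathrm{Ker}(g)$; a sequence is $u$-$S$-exact if it is so at each inner term. A homomorphism $h$ is a $u$-$S$-isomorphism if there is $s\in S$ with $s\,\mathrm{Ker}(h)=s\,\mathrm{Coker}(h)=0$; closure under $u$-$S$-isomorphisms means: if $A$ is in the class and there is a $u$-$S$-isomorphism $A\to B$, then $B$ is in the class. $M$ is $S$-finite with respect to $s\in S$ if there is a finitely generated submodule $F\subseteq M$ with $sM\subseteq F$. $M$ is $u$-$S$-finitely presented with respect to $s$ if there is an exact sequence $0\to T_1\to F\to M\to T_2\to 0$ with $F$ finitely presented and $sT_1=sT_2=0$. $M$ is $u$-$S$-coherent if there is $s\in S$ such that $M$ is $S$-finite with respect to $s$ and every finitely generated submodule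 of $M$ is $u$-$S$-finitely presented with respect to $s$. *)

(* Defs.v *)
From HB Require Import structures.
From mathcomp Require Import all_boot all_order all_algebra.
Set Implicit Arguments. Unset Strict Implicit. Unset Printing Implicit Defensive.
Import GRing.Theory.
Local Open Scope ring_scope.

(* Modules over a commutative ring R are MathComp [lmodType R]; submodules of
   a module M are predicates [M -> Prop]; R-linear maps are [{linear A -> B}]. *)
Section UsDefs.
Variable R : comPzRingType.

Definition mult_subset (S : R -> Prop) :=
  S 1 /\ (forall a b, S a -> S b -> S (a * b)).

Definition generated_by (M : lmodType R) (l : seq M) (x : M) :=
  exists c : 'I_(size l) -> R, x = \sum_(i < size l) c i *: l`_i.

Definition fg_submodule (M : lmodType R) (P : M -> Prop) :=
  exists l : seq M, forall x, P x <-> generated_by l x.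

Definition fin_presented (F : lmodType R) :=
  exists (n : nat) (h : {linear 'rV[R]_n -> F}),
    (forall y, exists x, h x = y) /\ fg_submodule (fun x => h x = 0).

Definition u_S_exact_at (S : R -> Prop) (A B C : lmodType R)
  (f : A -> B) (g : B -> C) :=
  exists s, S s /\
    (forall y, g y = 0 -> exists x, f x = s *: y) /\
    (forall x, g (s *: f x) = 0).

Definition u_S_exact_short (S : R -> Prop) (M N L : lmodType R)
  (f : M -> N) (g : N -> L) :=
  (exists s, S s /\ forall x, f x = 0 -> s *: x = 0)
  /\ u_S_exact_at S f g
  /\ (exists s, S s /\ forall z, exists y, g y = s *: z).

Definition u_S_iso (S : R -> Prop) (A B : lmodType R) (h : A -> B) :=
  exists s, S s /\ (forall x, h x = 0 -> s *: x = 0) /\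
                   (forall y, exists x, h x = s *: y).

Definition S_finite_wrt (s : R) (M : lmodType R) :=
  exists F : M -> Prop, fg_submodule F /\ forall m, F (s *: m).

Definition S_finite (S : R -> Prop) (M : lmodType R) :=
  exists s, S s /\ S_finite_wrt s M.

(* The submodule P of M (viewed as a module) is u-S-finitely presented w.r.t. s:
   there is an exact sequence 0 -> T1 --a--> F --h--> P --b--> T2 -> 0
   with F finitely presented and s T1 = s T2 = 0.  The maps h, b are given as
   maps F -> M (with values in P) and M -> T2 (only its restriction to P matters). *)
Definition u_S_fp_sub_wrt (s : R) (M : lmodType R) (P : M -> Prop) :=
  exists (T1 F T2 : lmodType R) (a : {linear T1 -> F}) (h : {linear F -> M})
         (b : {linear M -> T2}),
    fin_presented F /\
    (forall x y, a x = a y -> x = y) /\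
    (forall z, h z = 0 <-> exists x, a x = z) /\
    (forall z, P (h z)) /\
    (forall y, P y -> (b y = 0 <-> exists z, h z = y)) /\
    (forall t, exists y, P y /\ b y = t) /\
    (forall t : T1, s *: t = 0) /\ (forall t : T2, s *: t = 0).

Definition u_S_coherent (S : R -> Prop) (M : lmodType R) :=
  exists s, S s /\ S_finite_wrt s M /\
    forall P : M -> Prop, fg_submodule P -> u_S_fp_sub_wrt s P.

Definition is_direct_sum (n : nat) (Ms : 'I_n -> lmodType R) (D : lmodType R)
  (inj : forall i, {linear Ms i -> D}) (proj : forall i, {linear D -> Ms i}) :=
  (forall i (x : Ms i), proj i (inj i x) = x) /\
  (forall i j (x : Ms i), i != j -> proj j (inj i x) = 0) /\
  (forall y : D, \sum_(i < n) inj i (proj i y) = y).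

End UsDefs.

(* Main.v *)
Require Import Defs.
From HB Require Import structures.
From mathcomp Require Import all_boot all_order all_algebra.
Set Warnings "-notation-overridden -ambiguous-paths -redundant-canonical-projection".
From mathcomp Require Import ring zify.
From Stdlib Require Import IndefiniteDescription Classical ProofIrrelevance FunctionalExtensionality PropExtensionality.
Set Implicit Arguments. Unset Strict Implicit. Unset Printing Implicit Defensive.
Import GRing.Theory.
Local Open Scope ring_scope.


Section Lin.
Variable R : comPzRingType.

Definition lc (M : lmodType R) (k : nat) (l : nat -> M) (r : nat -> R) : M :=
  \sum_(i < k) r i *: l i.

Definition catf (T : Type) (m1 : nat) (a b : nat -> T) :=
  fun i => if (i < m1)%N then a i else b (i - m1)%N.

Variable M : lmodType R.
Implicit Types (l : nat -> M) (r : nat -> R).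

Lemma lc_ext_r k l r r' : (forall i, (i < k)%N -> r i = r' i) -> lc k l r = lc k l r'.
Proof. by move=> H; apply: eq_bigr => i _; rewrite H. Qed.
Lemma lc_ext_l k l l' r : (forall i, (i < k)%N -> l i = l' i) -> lc k l r = lc k l' r.
Proof. by move=> H; apply: eq_bigr => i _; rewrite H. Qed.
Lemma lcZr k l a r : lc k l (fun i => a * r i) = a *: lc k l r.
Proof. by rewrite /lc scaler_sumr; apply: eq_bigr => i _; rewrite scalerA. Qed.
Lemma lcZl k l a r : lc k (fun i => a *: l i) r = a *: lc k l r.
Proof. by rewrite /lc scaler_sumr; apply: eq_bigr => i _; rewrite !scalerA mulrC. Qed.
Lemma lcD k l r r' : lc k l (fun i => r i + r' i) = lc k l r + lc k l r'.
Proof. by rewrite /lc -big_split; apply: eq_bigr => i _; rewrite scalerDl. Qed.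
Lemma lcN k l r : lc k l (fun i => - r i) = - lc k l r.
Proof. by rewrite /lc -sumrN; apply: eq_bigr => i _; rewrite scaleNr. Qed.
Lemma lcB k l r r' : lc k l (fun i => r i - r' i) = lc k l r - lc k l r'.
Proof. by rewrite lcD lcN. Qed.
Lemma lc0r k l : lc k l (fun _ => 0) = 0.
Proof. by rewrite /lc big1 // => i _; rewrite scale0r. Qed.
Lemma lc0l k r : lc k (fun _ => (0 : M)) r = 0.
Proof. by rewrite /lc big1 // => i _; rewrite scaler0. Qed.
Lemma lc_sum k l m (c : nat -> R) (G : nat -> nat -> R) :
  lc k l (fun i => \sum_(j < m) c j * G j i) = lc m (fun j => lc k l (G j)) c.
Proof.
rewrite /lc; under eq_bigr do rewrite scaler_suml.
rewrite exchange_big; apply: eq_bigr => j _; rewrite scaler_sumr.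
by apply: eq_bigr => i _; rewrite scalerA.
Qed.
Lemma lc_cat m1 m2 (G1 G2 : nat -> M) c1 c2 :
  lc (m1 + m2) (catf m1 G1 G2) (catf m1 c1 c2) = lc m1 G1 c1 + lc m2 G2 c2.
Proof.
rewrite /lc big_split_ord /=; congr (_ + _); apply: eq_bigr => i _ /=.
  by rewrite /catf ltn_ord.
by rewrite /catf ltnNge leq_addr /= addKn.
Qed.
Lemma lc_split m1 m2 (G1 G2 : nat -> M) r :
  lc (m1 + m2) (catf m1 G1 G2) r = lc m1 G1 r + lc m2 G2 (fun j => r (m1 + j)%N).
Proof.
rewrite /lc big_split_ord /=; congr (_ + _); apply: eq_bigr => i _ /=.
  by rewrite /catf ltn_ord.
by rewrite /catf ltnNge leq_addr /= addKn.
Qed.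
End Lin.

Lemma lc_lin (R : comPzRingType) (M N : lmodType R) (f : {linear M -> N}) k l r :
  f (lc k l r) = lc k (fun i => f (l i)) r.
Proof. by rewrite /lc linear_sum; apply: eq_bigr => i _; rewrite linearZ. Qed.

Section Fin.
Variable R : comPzRingType.

Definition span m (G : nat -> nat -> R) k (v : nat -> R) :=
  exists c : nat -> R, forall i, (i < k)%N -> v i = \sum_(j < m) c j * G j i.

Definition SF (s : R) k (K : (nat -> R) -> Prop) :=
  exists m (G : nat -> nat -> R), (forall j, (j < m)%N -> K (G j)) /\
    forall r, K r -> span m G k (fun i => s * r i).

Definition Relfin (M : lmodType R) (s : R) k (l : nat -> M) :=
  SF s k (fun r => lc k l r = 0).

Definition SfinM (s : R) (M : lmodType R) :=
  exists m (G : nat -> M), forall x, exists c, s *: x = lc m G c.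

Definition Coh (s : R) (M : lmodType R) :=
  SfinM s M /\ forall k (l : nat -> M), Relfin s k l.

Lemma span_lc (M : lmodType R) m G k v (l : nat -> M) : span m G k v ->
  exists c, lc k l v = lc m (fun j => lc k l (G j)) c.
Proof. case=> c Hc; exists c; rewrite -lc_sum; exact: (lc_ext_r _ Hc). Qed.

Lemma span_mul m G k v u : span m G k v -> span m G k (fun i => u * v i).
Proof.
case=> c Hc; exists (fun j => u * c j) => i /Hc ->.
by rewrite mulr_sumr; apply: eq_bigr => j _; rewrite mulrA.
Qed.

Lemma SF_mul u s k K : SF s k K -> SF (u * s) k K.
Proof.
case=> m [G [HG Hs]]; exists m, G; split=> // r /Hs /(span_mul u).
by case=> c Hc; exists c => i /Hc <-; rewrite mulrA.
Qed.

Lemma SF_ext s k K K' : SF s k K -> (forall v, K v <-> K' v) -> SF s k K'.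
Proof.
case=> m [G [HG Hs]] E; exists m, G; split=> [j /HG /E //|r /E]; exact: Hs.
Qed.

Lemma SfinM_mul u s M : SfinM s M -> SfinM (u * s) M.
Proof.
case=> m [G HG]; exists m, G => x; case: (HG x) => c Hc.
by exists (fun j => u * c j); rewrite lcZr -Hc scalerA.
Qed.

Lemma Coh_mul u s M : Coh s M -> Coh (u * s) M.
Proof.
move=> [H1 H2]; split; first exact: (SfinM_mul u H1). by move=> k l; apply: (SF_mul u (H2 k l)).
Qed.

End Fin.


Section Quot.
Variable R : comPzRingType.
Variable V : lmodType R.
Variable K : V -> Prop.
Hypothesis K0 : K 0.
Hypothesis KD : forall x y, K x -> K y -> K (x + y).
Hypothesis KZ : forall a x, K x -> K (a *: x).

Lemma KN x : K x -> K (- x).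
Proof. by move=> Kx; rewrite -scaleN1r; apply: KZ. Qed.
Lemma KB x y : K x -> K y -> K (x - y).
Proof. by move=> Kx Ky; apply: KD => //; apply: KN. Qed.

Lemma diffE (a b c : V) : (c - b) - (c - a) = a - b.
Proof. by rewrite opprB addrC addrA subrK. Qed.

Lemma exrep (x : V) : exists y, K (y - x).
Proof. by exists x; rewrite subrr. Qed.

Definition rep (x : V) : V :=
  proj1_sig (constructive_indefinite_description _ (exrep x)).

Lemma rep_spec x : K (rep x - x).
Proof. exact: (proj2_sig (constructive_indefinite_description _ (exrep x))). Qed.

Lemma cid_ext (P Q : V -> Prop) (e : P = Q) (hp : exists y, P y) (hq : exists y, Q y) :
  proj1_sig (constructive_indefinite_description P hp) =
  proj1_sig (constructive_indefinite_description Q hq).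
Proof. by subst; rewrite (proof_irrelevance _ hp hq). Qed.

Lemma rep_eq x y : K (x - y) -> rep x = rep y.
Proof.
move=> Kxy; apply: cid_ext; apply: functional_extensionality => z.
apply: propositional_extensionality; split=> H.
  by have := KD H Kxy; rewrite addrA subrK.
by have := KB H Kxy; rewrite opprB addrA subrK.
Qed.

Lemma rep_rep x : rep (rep x) = rep x.
Proof. exact/rep_eq/rep_spec. Qed.

Definition qT : Type := let _ := KD in let _ := KZ in {x : V | rep x == x}.
HB.instance Definition _ := [Choice of qT by <:].

Definition qpi (x : V) : qT := exist _ (rep x) (introT eqP (rep_rep x)).

Lemma qpi_val (a : qT) : qpi (val a) = a.
Proof. by apply: val_inj => /=; case: a => x /= /eqP. Qed.

Lemma qpiP x y : qpi x = qpi y <-> K (x - y).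
Proof.
split=> [/(congr1 val) /= e|]; last by move=> H; apply: val_inj; apply: rep_eq.
have h1 := rep_spec x; have h2 := rep_spec y; rewrite e in h1.
by have := KB h2 h1; rewrite diffE.
Qed.

Lemma rep_diff x : K (x - rep x).
Proof. by rewrite -opprB; apply/KN/rep_spec. Qed.

Definition qzero := qpi 0.
Definition qadd (a b : qT) := qpi (val a + val b).
Definition qopp (a : qT) := qpi (- val a).
Definition qscale (r : R) (a : qT) := qpi (r *: val a).

Lemma qaddE x y : qadd (qpi x) (qpi y) = qpi (x + y).
Proof.
apply/qpiP => /=; have := KD (rep_spec x) (rep_spec y).
by rewrite opprD addrACA.
Qed.
Lemma qoppE x : qopp (qpi x) = qpi (- x).
Proof. by apply/qpiP => /=; rewrite opprK addrC; apply: rep_diff. Qed.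
Lemma qscaleE r x : qscale r (qpi x) = qpi (r *: x).
Proof. by apply/qpiP => /=; rewrite -scalerBr; apply/KZ/rep_spec. Qed.

Lemma qind (P : qT -> Prop) : (forall x, P (qpi x)) -> forall a, P a.
Proof. by move=> H a; rewrite -(qpi_val a). Qed.

Lemma qaddA : associative qadd.
Proof. by elim/qind=> x; elim/qind=> y; elim/qind=> z; rewrite !qaddE addrA. Qed.
Lemma qaddC : commutative qadd.
Proof. by elim/qind=> x; elim/qind=> y; rewrite !qaddE addrC. Qed.
Lemma qadd0 : left_id qzero qadd.
Proof. by elim/qind=> x; rewrite qaddE add0r. Qed.
Lemma qaddN : left_inverse qzero qopp qadd.
Proof. by elim/qind=> x; rewrite qoppE qaddE addNr. Qed.

HB.instance Definition _ := GRing.isZmodule.Build qT qaddA qaddC qadd0 qaddN.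

Lemma qaddrE (a b : qT) : a + b = qadd a b. Proof. by []. Qed.

Lemma qscaleA a b v : qscale a (qscale b v) = qscale (a * b) v.
Proof. by elim/qind: v => x; rewrite !qscaleE scalerA. Qed.
Lemma qscale1 : left_id 1 qscale.
Proof. by elim/qind=> x; rewrite qscaleE scale1r. Qed.
Lemma qscaleDr : right_distributive qscale +%R.
Proof. move=> a; elim/qind=> x; elim/qind=> y. by rewrite !qaddrE (qaddE x y) !qscaleE scalerDr qaddE. Qed.
Lemma qscaleDl v : {morph qscale^~ v: a b / a + b}.
Proof. by elim/qind: v => x a b; rewrite !qaddrE !qscaleE (qaddE (a *: x)) scalerDl. Qed.

HB.instance Definition _ := GRing.Zmodule_isLmodule.Build R qT qscaleA qscale1 qscaleDr qscaleDl.

Lemma qpi_is_linear : linear qpi.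
Proof. by move=> a x y; rewrite qaddrE; change (a *: qpi x) with (qscale a (qpi x)); rewrite qscaleE qaddE. Qed.
HB.instance Definition _ := GRing.isLinear.Build R V qT _ qpi qpi_is_linear.

Lemma qpi0 x : qpi x = 0 <-> K x.
Proof. by have := qpiP x 0; rewrite subr0. Qed.

End Quot.


Lemma pb_ex (T : Type) (P : T -> Prop) (x : T) : exists b : bool, b = true <-> P x.
Proof. by case: (classic (P x)) => H; [exists true | exists false]; split. Qed.
Definition pb (T : Type) (P : T -> Prop) (x : T) : bool :=
  proj1_sig (constructive_indefinite_description _ (pb_ex P x)).
Lemma pbP (T : Type) (P : T -> Prop) x : reflect (P x) (pb P x).
Proof. by apply: (iffP idP); apply (proj2_sig (constructive_indefinite_description _ (pb_ex P x))). Qed.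

Section Subm.
Variable R : comPzRingType.
Variable V : lmodType R.
Variable P : V -> Prop.
Hypothesis P0 : P 0.
Hypothesis PD : forall x y, P x -> P y -> P (x + y).
Hypothesis PZ : forall a x, P x -> P (a *: x).

Definition sT : Type := let _ := P0 in let _ := PD in let _ := PZ in {x : V | pb P x}.
HB.instance Definition _ := [Choice of sT by <:].

Lemma sP (a : sT) : P (val a). Proof. exact/pbP/(valP a). Qed.
Definition smk x (Px : P x) : sT := exist _ x (introT (pbP P x) Px).
Definition szero := smk P0.
Definition sadd (a b : sT) := smk (PD (sP a) (sP b)).
Definition sscale r (a : sT) := smk (PZ r (sP a)).
Lemma PN x : P x -> P (- x). Proof. by move=> Px; rewrite -scaleN1r; apply: PZ. Qed.
Definition sopp (a : sT) := smk (PN (sP a)).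

Lemma saddA : associative sadd.
Proof. by move=> a b c; apply: val_inj; rewrite /= addrA. Qed.
Lemma saddC : commutative sadd.
Proof. by move=> a b; apply: val_inj; rewrite /= addrC. Qed.
Lemma sadd0 : left_id szero sadd.
Proof. by move=> a; apply: val_inj; rewrite /= add0r. Qed.
Lemma saddN : left_inverse szero sopp sadd.
Proof. by move=> a; apply: val_inj; rewrite /= addNr. Qed.
HB.instance Definition _ := GRing.isZmodule.Build sT saddA saddC sadd0 saddN.
Lemma sscaleA a b v : sscale a (sscale b v) = sscale (a * b) v.
Proof. by apply: val_inj; rewrite /= scalerA. Qed.
Lemma sscale1 : left_id 1 sscale.
Proof. by move=> v; apply: val_inj; rewrite /= scale1r. Qed.
Lemma sscaleDr : right_distributive sscale +%R.
Proof. by move=> a u v; apply: val_inj; rewrite /= scalerDr. Qed.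
Lemma sscaleDl v : {morph sscale^~ v: a b / a + b}.
Proof. by move=> a b; apply: val_inj; rewrite /= scalerDl. Qed.
HB.instance Definition _ := GRing.Zmodule_isLmodule.Build R sT sscaleA sscale1 sscaleDr sscaleDl.

Definition subv (a : sT) : V := val a.
Lemma subv_is_linear : linear subv.
Proof. by []. Qed.
HB.instance Definition _ := GRing.isLinear.Build R sT V _ subv subv_is_linear.
Lemma subv_inj : injective subv. Proof. exact: val_inj. Qed.
End Subm.

Section Zero.
Variable R : comPzRingType.
Variable M : lmodType R.
Definition zf (x : M) : 'rV[R]_0 := 0.
Lemma zf_lin : linear zf. Proof. by move=> a x y; rewrite /zf scaler0 addr0. Qed.
HB.instance Definition _ := GRing.isLinear.Build R M 'rV[R]_0 _ zf zf_lin.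
End Zero.


Section Parts.
Variable R : comPzRingType.

Lemma coh_iso (A B : lmodType R) (h : {linear A -> B}) (s0 t : R) :
  (forall x, h x = 0 -> s0 *: x = 0) -> (forall y, exists x, h x = s0 *: y) ->
  Coh t A -> Coh (s0 * (t * s0)) B.
Proof.
move=> Hk Hc [[m [G HG]] HR].
have [pre Hpre] := functional_choice _ Hc.
split.
  exists m, (fun j => h (G j)) => y; case: (HG (pre y)) => c Hcc.
  exists (fun j => s0 * c j); rewrite lcZr -lc_lin -Hcc.
  by rewrite linearZ Hpre !scalerA mulrA.
move=> k l; case: (HR k (fun i => pre (l i))) => m' [G' [HG' Hs]].
have E r : lc k l (fun i => s0 * r i) = h (lc k (fun i => pre (l i)) r).
  by rewrite lc_lin lcZr -lcZl; apply: lc_ext_l => i _; rewrite Hpre.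
exists m', (fun j i => s0 * G' j i); split.
  by move=> j /HG' Hj; rewrite E Hj linear0.
move=> r Hr.
have H0 : lc k (fun i => pre (l i)) (fun i => s0 * r i) = 0.
  by rewrite lcZr; apply: Hk; rewrite -E lcZr Hr scaler0.
case: (Hs _ H0) => c Hc2; exists c => i Hi.
rewrite /=; under eq_bigr do rewrite mulrCA.
by rewrite -mulr_sumr -Hc2 //; ring.
Qed.
End Parts.


Lemma choice_imp (A B : Type) (b0 : B) (P : A -> Prop) (Q : A -> B -> Prop) :
  (forall y, P y -> exists x, Q y x) -> exists F : A -> B, forall y, P y -> Q y (F y).
Proof.
move=> H; apply: (functional_choice (fun y x => P y -> Q y x)) => y.
case: (classic (P y)) => [/H [x Hx]|nP]; first by exists x.
by exists b0.
Qed.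

Lemma sum_swap (R : comPzRingType) m1 m2 (a : nat -> R) (b : nat -> nat -> R) (e : nat -> R) :
  \sum_(h < m1) (\sum_(j < m2) a j * b j h) * e h =
  \sum_(j < m2) a j * \sum_(h < m1) b j h * e h.
Proof.
under eq_bigr do rewrite mulr_suml.
rewrite exchange_big; apply: eq_bigr => j _; rewrite mulr_sumr.
by apply: eq_bigr => h _; rewrite mulrA.
Qed.

Section Parts.
Variable R : comPzRingType.

Lemma Coh_of (s1 s2 : R) (M : lmodType R) : SfinM s1 M -> (forall k (l : nat -> M), Relfin s2 k l) -> Coh (s1 * s2) M.
Proof.
move=> H1 H2; split; first by rewrite mulrC; exact: (SfinM_mul s2 H1).
by move=> k l; exact: (SF_mul s1 (H2 k l)).
Qed.

Variables (M N L : lmodType R) (f : {linear M -> N}) (g : {linear N -> L}).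
Variables (s1 s2 s3 : R).
Hypothesis Hf : forall x, f x = 0 -> s1 *: x = 0.
Hypothesis Hex1 : forall y, g y = 0 -> exists x, f x = s2 *: y.
Hypothesis Hex2 : forall x, g (s2 *: f x) = 0.
Hypothesis Hg : forall z, exists y, g y = s3 *: z.

Lemma coh_ext tM tL : Coh tM M -> Coh tL L ->
  Coh ((tM * s2 * (s3 * tL)) * (s2 * (tM * (s1 * tL)))) N.
Proof.
move=> [[mM [GM HGM]] HRM] [[mL [GL HGL]] HRL].
have [preg Hpreg] := functional_choice _ Hg.
have [pref Hpref] := choice_imp 0 Hex1.
apply: Coh_of.
  exists (mM + mL)%N, (catf mM (fun j => f (GM j)) (fun j => preg (GL j))) => y.
  case: (HGL (g y)) => c Hc.
  set y' := (s3 * tL) *: y - lc mL (fun j => preg (GL j)) c.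
  have gy' : g y' = 0.
    rewrite linearB linearZ_LR lc_lin /=.
    rewrite (lc_ext_l _ (l' := fun j => s3 *: GL j)); last by move=> i _; rewrite Hpreg.
    by rewrite lcZl -Hc scalerA subrr.
  case: (HGM (pref y')) => c' Hc'.
  exists (catf mM c' (fun j => tM * s2 * c j)); rewrite lc_cat lcZr -lc_lin -Hc'.
  rewrite linearZ_LR (Hpref _ gy') scalerA /y' scalerBr subrK scalerA.
  by rewrite mulrA.
move=> k l; case: (HRL k (fun i => g (l i))) => mL' [H [HH HsH]].
set z := fun h => lc k l (H h).
have gz h : (h < mL')%N -> g (z h) = 0 by move=> Hh; rewrite /z lc_lin; apply: HH.
case: (HRM mL' (fun h => pref (z h))) => mJ [J [HJ HsJ]].
have fx c : lc mL' (fun h => f (pref (z h))) c = s2 *: lc mL' z c.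
  by rewrite -lcZl; apply: lc_ext_l => h Hh; rewrite Hpref // gz.
exists mJ, (fun j i => s2 * \sum_(h < mL') J j h * H h i); split.
  move=> j Hj; rewrite lcZr lc_sum -fx -lc_lin HJ // linear0 //.
move=> r Hr.
have Hr' : lc k (fun i => g (l i)) r = 0 by rewrite -lc_lin Hr linear0.
case: (HsH r Hr') => c Hc.
have E1 : lc mL' z c = 0.
  by rewrite /z -lc_sum -(lc_ext_r _ Hc) lcZr Hr scaler0.
have E2 : lc mL' (fun h => pref (z h)) (fun h => s1 * c h) = 0.
  by rewrite lcZr; apply: Hf; rewrite lc_lin fx E1 scaler0.
case: (HsJ _ E2) => d Hd; exists d => i Hi.
have -> : s2 * (tM * (s1 * tL)) * r i = s2 * ((tM * s1) * (tL * r i)) by ring.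
rewrite Hc // mulr_sumr.
transitivity (s2 * \sum_(h < mL') (\sum_(j < mJ) d j * J j h) * H h i).
  by congr (_ * _); apply: eq_bigr => h _; rewrite -Hd // mulrA mulrA.
rewrite (sum_swap _ _ d J (fun h => H h i)) mulr_sumr; apply: eq_bigr => j _; ring.
Qed.

Lemma coh_sub tN tL : Coh tN N -> Coh tL L ->
  Coh ((s1 * (s2 * (tL * s2 * tN))) * (s1 * tN)) M.
Proof.
move=> [[mN [GN HGN]] HRN] [_ HRL].
have [pref Hpref] := choice_imp 0 Hex1.
apply: Coh_of.
  case: (HRL mN (fun j => g (GN j))) => mH [H [HH HsH]].
  set z := fun h => lc mN GN (H h).
  have gz h : (h < mH)%N -> g (z h) = 0 by move=> Hh; rewrite /z lc_lin; apply: HH.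
  exists mH, (fun h => pref (z h)) => x.
  case: (HGN (f x)) => c Hc.
  have E0 : lc mN (fun j => g (GN j)) (fun i => s2 * c i) = 0.
    rewrite lcZr -lc_lin -Hc -linearZ_LR scalerA mulrC -scalerA linearZ_LR.
    by rewrite Hex2 scaler0.
  case: (HsH _ E0) => d Hd.
  have E1 : lc mN GN (fun i => tL * (s2 * c i)) = lc mH z d.
    by rewrite -lc_sum; apply: lc_ext_r => i Hi; rewrite Hd.
  have E2 : f (lc mH (fun h => pref (z h)) d) = f ((s2 * (tL * s2 * tN)) *: x).
    rewrite lc_lin (lc_ext_l _ (l' := fun h => s2 *: z h)); last first.
      by move=> h Hh; rewrite Hpref // gz.
    by rewrite lcZl -E1 !lcZr -Hc !scalerA linearZ_LR !mulrA.
  exists (fun h => s1 * d h); rewrite lcZr; apply/eqP; rewrite -subr_eq0 -scalerA -scalerBr.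
  by apply/eqP/Hf; rewrite linearB E2 subrr.
move=> k l; case: (HRN k (fun i => f (l i))) => m [G [HG Hs]].
exists m, (fun j i => s1 * G j i); split.
  by move=> j Hj; rewrite lcZr; apply: Hf; rewrite lc_lin; apply: HG.
move=> r Hr; have Hr' : lc k (fun i => f (l i)) r = 0 by rewrite -lc_lin Hr linear0.
case: (Hs _ Hr') => c Hc; exists c => i Hi.
rewrite -mulrA Hc // mulr_sumr; apply: eq_bigr => j _; ring.
Qed.

Lemma coh_quot tN u : Coh tN N -> SfinM u M ->
  Coh ((tN * s3) * (s2 * (s3 * (tN * (u * s2))))) L.
Proof.
move=> [[mN [GN HGN]] HRN] [p [GM HGM]].
have [preg Hpreg] := functional_choice _ Hg.
have [pref Hpref] := choice_imp 0 Hex1.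
apply: Coh_of.
  exists mN, (fun j => g (GN j)) => z.
  case: (HGN (preg z)) => c Hc; exists c.
  by rewrite -lc_lin -Hc linearZ_LR Hpreg scalerA.
move=> k l.
set y := fun i => preg (l i).
have gy r : g (lc k y r) = s3 *: lc k l r.
  by rewrite lc_lin -lcZl; apply: lc_ext_l => i _; rewrite Hpreg.
case: (HRN (k + p)%N (catf k y (fun j => f (GM j)))) => mH [H [HH HsH]].
exists mH, (fun h i => s2 * (s3 * H h i)); split.
  move=> h Hh; have := HH h Hh; rewrite lc_split => /eqP; rewrite addr_eq0 => /eqP E.
  by rewrite !lcZr -gy -linearZ_LR E -lc_lin scalerN linearN Hex2 oppr0.
move=> r Hr.
have g0 : g (lc k y r) = 0 by rewrite gy Hr scaler0.
case: (HGM (pref (lc k y r))) => e He.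
have E : lc (k + p) (catf k y (fun j => f (GM j)))
            (catf k (fun i => u * (s2 * r i)) (fun j => - e j)) = 0.
  rewrite lc_cat lcN -lc_lin -He linearZ_LR Hpref // !lcZr scalerA subrr //.
case: (HsH _ E) => c Hc; exists c => i Hi.
have Hi' : (i < k + p)%N by apply: leq_trans Hi (leq_addr _ _).
move: (Hc i Hi'); rewrite /catf Hi => E'.
have -> : \sum_(j < mH) c j * (s2 * (s3 * H j i)) = s2 * s3 * \sum_(j < mH) c j * H j i.
  by rewrite mulr_sumr; apply: eq_bigr => j _; ring.
rewrite -E'; ring.
Qed.
End Parts.


Section DS.
Variable R : comPzRingType.

Lemma sum_span (D : lmodType R) (I : Type) (r : seq I) (F : I -> D -> Prop) :
  (forall i, exists m (G : nat -> D), forall x, F i x -> exists c, x = lc m G c) ->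
  exists m (G : nat -> D), forall xs : I -> D, (forall i, F i (xs i)) ->
    exists c, \sum_(i <- r) xs i = lc m G c.
Proof.
move=> HF; elim: r => [|i r [m [G IH]]].
  by exists 0%N, (fun _ => 0) => xs _; exists (fun _ => 0); rewrite big_nil /lc big_ord0.
case: (HF i) => m' [G' H'].
exists (m' + m)%N, (catf m' G' G) => xs Hxs.
case: (IH xs Hxs) => c Hc; case: (H' _ (Hxs i)) => c' Hc'.
by exists (catf m' c' c); rewrite big_cons lc_cat -Hc -Hc'.
Qed.

Lemma SF_int (M' : lmodType R) (sg t : R) k (K : (nat -> R) -> Prop) (l' : nat -> M') :
  (forall m (c : nat -> R) G, (forall j, (j < m)%N -> K (G j)) -> K (fun i => \sum_(j < m) c j * G j i)) ->
  SF sg k K -> (forall kk (ll : nat -> M'), Relfin t kk ll) ->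
  SF (t * sg) k (fun r => K r /\ lc k l' r = 0).
Proof.
move=> Kcl [m [G [HG Hs]]] HR.
case: (HR m (fun g => lc k l' (G g))) => mH [H [HH HsH]].
exists mH, (fun h i => \sum_(g < m) H h g * G g i); split.
  by move=> h Hh; split; [apply: Kcl | rewrite lc_sum; apply: HH].
move=> r [Kr Hr]; case: (Hs r Kr) => c Hc.
have E : lc m (fun g => lc k l' (G g)) c = 0.
  by rewrite -lc_sum -(lc_ext_r _ Hc) lcZr Hr scaler0.
case: (HsH c E) => d Hd; exists d => i Hi.
rewrite -mulrA Hc // mulr_sumr.
transitivity (\sum_(g < m) (\sum_(h < mH) d h * H h g) * G g i).
  by apply: eq_bigr => g _; rewrite -Hd // mulrA.
by rewrite (sum_swap _ _ d H (fun g => G g i)).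
Qed.

Lemma sum_delta k (v : nat -> R) i : (i < k)%N ->
  v i = \sum_(j < k) v j * ((i == j)%:R : R).
Proof.
move=> Hi; rewrite (bigD1 (Ordinal Hi)) //= eqxx mulr1 big1 ?addr0 // => j.
by rewrite -val_eqE /= eq_sym => /negPf ->; rewrite mulr0.
Qed.

Lemma SF_all k : SF (1 : R) k (fun _ => True).
Proof.
exists k, (fun j i => ((i == j)%:R : R)); split=> // r _; exists r => i Hi.
by rewrite mul1r; apply: sum_delta.
Qed.

Lemma coh_dsum n (Ms : 'I_n -> lmodType R) (D : lmodType R)
  (inj : forall i, {linear Ms i -> D}) (proj : forall i, {linear D -> Ms i})
  (t : 'I_n -> R) :
  (forall y : D, \sum_(i < n) inj i (proj i y) = y) ->
  (forall i, Coh (t i) (Ms i)) -> Coh (\prod_(i < n) t i) D.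
Proof.
move=> Hsum HC; split.
  have [m [G HG]] := @sum_span D _ (index_enum 'I_n)
      (fun i x => exists z : Ms i, x = inj i (t i *: z)) (fun i =>
       let: conj (ex_intro m (ex_intro G HG)) _ := HC i in
       ex_intro _ m (ex_intro _ (fun j => inj i (G j)) (fun x Hx =>
         let: ex_intro z Hz := Hx in
         let: ex_intro c Hc := HG z in
         ex_intro _ c (eq_trans Hz (eq_trans (f_equal (inj i) Hc) (lc_lin _ _ _ _)))))).
  exists m, G => y.
  set xs := fun i => inj i ((\prod_(i < n) t i) *: proj i y).
  have Hx : forall i, exists z : Ms i, xs i = inj i (t i *: z).
    move=> i; exists ((\prod_(j < n | j != i) t j) *: proj i y).
    by rewrite /xs scalerA [in LHS](bigD1 i).
  case: (HG xs Hx) => c Hc; exists c.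
  by rewrite -Hc -{1}(Hsum y) scaler_sumr; apply: eq_bigr => i _; rewrite /xs (linearZ_LR (inj i)).
move=> k l.
have H : forall r : seq 'I_n, SF (\prod_(i <- r) t i) k
    (fun v => forall i, i \in r -> lc k (fun j => proj i (l j)) v = 0).
  elim=> [|i r IH].
    by rewrite big_nil; apply: SF_ext (SF_all k) _.
  rewrite big_cons.
  have [_ HRi] := HC i.
  apply: SF_ext (@SF_int (Ms i) _ (t i) k _ (fun j => proj i (l j)) _ IH HRi) _.
    by move=> m c G HG j Hj; rewrite lc_sum {1}/lc; apply: big1 => g _; rewrite HG // scaler0.
  move=> v; split=> [[H1 H2] j|H1]; first by rewrite in_cons => /orP [/eqP -> //|/H1].
  split; last by apply: H1; rewrite in_cons eqxx.
  by move=> j Hj; apply: H1; rewrite in_cons Hj orbT.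
apply: SF_ext (H (index_enum 'I_n)) _ => v; split=> [Hv|Hv].
  rewrite -(Hsum (lc k l v)) big1 // => i _.
  by rewrite lc_lin Hv ?mem_index_enum // linear0.
by move=> i _; rewrite -lc_lin Hv linear0.
Qed.
End DS.


Section Br.
Variable R : comPzRingType.

Lemma gen_lc (M : lmodType R) (L : seq M) x :
  generated_by L x <-> exists c : nat -> R, x = lc (size L) (nth 0 L) c.
Proof.
split=> [[c ->]|[c ->]].
  exists (fun i => if insub i is Some j then c j else 0).
  by apply: eq_bigr => i _; rewrite valK.
by exists (fun i => c i).
Qed.

Lemma gen_mk (M : lmodType R) m (F : nat -> M) x :
  generated_by (mkseq F m) x <-> exists c : nat -> R, x = lc m F c.
Proof.
rewrite gen_lc size_mkseq; split=> [[c ->]|[c ->]]; exists c;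
  by apply: lc_ext_l => i Hi; rewrite nth_mkseq.
Qed.

Lemma lc_delta (M : lmodType R) k (l : nat -> M) i : (i < k)%N ->
  lc k l (fun j => ((j == i)%:R : R)) = l i.
Proof.
move=> Hi; rewrite /lc (bigD1 (Ordinal Hi)) //= eqxx scale1r big1 ?addr0 // => j.
by rewrite -val_eqE /= => /negPf ->; rewrite scale0r.
Qed.

Definition ofv n (v : 'rV[R]_n) : nat -> R :=
  fun i => if insub i is Some j then v 0 j else 0.
Definition tov n (r : nat -> R) : 'rV[R]_n := \row_(i < n) r i.

Lemma ofvE n (v : 'rV[R]_n) (j : 'I_n) : ofv v j = v 0 j.
Proof. by rewrite /ofv valK. Qed.
Lemma ofv_tov n (r : nat -> R) i : (i < n)%N -> ofv (tov n r) i = r i.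
Proof. by move=> Hi; rewrite /ofv insubT /tov mxE. Qed.
Lemma ofv_lc n p (U : nat -> 'rV[R]_n) (w : nat -> R) i :
  ofv (lc p U w) i = \sum_(t < p) w t * ofv (U t) i.
Proof.
rewrite /ofv; case: insubP => [j _ _|_]; last by rewrite big1 // => t _; rewrite mulr0.
by rewrite /lc summxE; apply: eq_bigr => t _; rewrite mxE.
Qed.
Lemma ofvZ n a (v : 'rV[R]_n) i : ofv (a *: v) i = a * ofv v i.
Proof. by rewrite /ofv; case: insubP => [j _ _|_]; rewrite ?mxE ?mulr0. Qed.
Lemma ofvD n (v w : 'rV[R]_n) i : ofv (v + w) i = ofv v i + ofv w i.
Proof. by rewrite /ofv; case: insubP => [j _ _|_]; rewrite ?mxE ?addr0. Qed.
Lemma row_decomp n (u : 'rV[R]_n) :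
  u = lc n (fun j => tov n (fun i => ((i == j)%:R : R))) (ofv u).
Proof.
apply/rowP => i; rewrite /lc summxE (bigD1 i) //= ofvE !mxE eqxx mulr1 big1 ?addr0 //.
by move=> j /negPf; rewrite !mxE -val_eqE /= eq_sym => ->; rewrite mulr0.
Qed.

Lemma gen0 (M : lmodType R) (L : seq M) : generated_by L 0.
Proof. by exists (fun _ => 0); rewrite big1 // => i _; rewrite scale0r. Qed.
Lemma genD (M : lmodType R) (L : seq M) x y :
  generated_by L x -> generated_by L y -> generated_by L (x + y).
Proof.
by move=> [c ->] [d ->]; exists (fun i => c i + d i); rewrite -big_split; apply: eq_bigr => i _; rewrite scalerDl.
Qed.
Lemma genZ (M : lmodType R) (L : seq M) a x :
  generated_by L x -> generated_by L (a *: x).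
Proof.
by move=> [c ->]; exists (fun i => a * c i); rewrite scaler_sumr; apply: eq_bigr => i _; rewrite scalerA.
Qed.

Section BR1.
Variables (M : lmodType R) (L : seq M) (s : R).
Let k := size L.
Let l := nth 0 L.

Definition lcv (v : 'rV[R]_k) : M := lc k l (ofv v).
Lemma lcv_is_linear : linear lcv.
Proof.
move=> a u v; rewrite /lcv -lcZr -lcD; apply: lc_ext_r => i _.
by rewrite ofvD ofvZ.
Qed.
HB.instance Definition _ := GRing.isLinear.Build R 'rV[R]_k M _ lcv lcv_is_linear.

Lemma lcv_tov r : lcv (tov k r) = lc k l r.
Proof. by apply: lc_ext_r => i Hi; rewrite ofv_tov. Qed.

Section Inner.
Variables (m : nat) (G : nat -> nat -> R).
Hypothesis HG : forall j, (j < m)%N -> lc k l (G j) = 0.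
Hypothesis Hs : forall r, lc k l r = 0 -> span m G k (fun i => s * r i).

Definition K0 (v : 'rV[R]_k) := generated_by (mkseq (fun j => tov k (G j)) m) v.
Lemma K00 : K0 0. Proof. exact: gen0. Qed.
Lemma K0D x y : K0 x -> K0 y -> K0 (x + y). Proof. exact: genD. Qed.
Lemma K0Z a x : K0 x -> K0 (a *: x). Proof. exact: genZ. Qed.
Lemma K0l v : K0 v -> lcv v = 0.
Proof.
move=> /gen_mk [c ->]; rewrite lc_lin /=.
rewrite (lc_ext_l _ (l' := fun _ => 0)) ?lc0l //.
by move=> j Hj; rewrite lcv_tov HG.
Qed.
Local Notation Q := (qT K00 K0D K0Z).
Local Notation pi := (qpi K00 K0D K0Z).
Definition hQ (q : Q) : M := lcv (val q).
Lemma hQ_pi v : hQ (pi v) = lcv v.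
Proof.
rewrite /hQ /=; apply/eqP; rewrite -subr_eq0 -linearB.
by apply/eqP/K0l; exact: (rep_spec K00 v).
Qed.
Lemma hQ_lin : linear hQ.
Proof.
move=> a; elim/(@qind _ _ _ K00 K0D K0Z) => x; elim/(@qind _ _ _ K00 K0D K0Z) => y.
have -> : a *: pi x + pi y = pi (a *: x + y) by rewrite linearP.
by rewrite !hQ_pi linearP.
Qed.
HB.instance Definition _ := GRing.isLinear.Build R Q M _ hQ hQ_lin.
Lemma P0 : hQ 0 = 0. Proof. exact: linear0. Qed.
Lemma PD (x y : Q) : hQ x = 0 -> hQ y = 0 -> hQ (x + y) = 0.
Proof. by move=> Hx Hy; have := hQ_lin 1 x y; rewrite !scale1r Hx Hy addr0. Qed.
Lemma PZ a (x : Q) : hQ x = 0 -> hQ (a *: x) = 0.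
Proof. by move=> Hx; have := hQ_lin a x 0; rewrite addr0 P0 addr0 Hx scaler0. Qed.
Local Notation T1 := (sT P0 PD PZ).

Lemma BR1_inner : u_S_fp_sub_wrt s (generated_by L).
Proof.
have pi_val : forall q : Q, pi (val q) = q by move=> q; exact: qpi_val.
have piK : forall v, pi v = 0 <-> K0 v by move=> v; exact: qpi0.
exists T1, Q, 'rV[R]_0, (@subv _ _ _ P0 PD PZ : {linear T1 -> Q}), (hQ : {linear Q -> M}),
  (@zf _ M : {linear M -> 'rV[R]_0}).
split.
  exists k, (pi : {linear 'rV[R]_k -> Q}); split; first by move=> y; exists (val y); exact: pi_val.
  by exists (mkseq (fun j => tov k (G j)) m) => x; apply: piK.
split; first exact: subv_inj.
split.
  move=> z; split=> [Hz|[x <-]]; last exact: (sP x).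
  by exists (smk P0 PD PZ Hz).
split.
  move=> z; rewrite -(pi_val z); apply/gen_lc.
  by exists (ofv (val z)); rewrite /= hQ_pi.
split.
  move=> y /gen_lc [c ->]; split=> // _.
  by exists (pi (tov k c)); rewrite /= hQ_pi lcv_tov.
split.
  by move=> t; exists 0; split; [exact: gen0 | rewrite (thinmx0 t)].
split; last by move=> t; rewrite (thinmx0 t) scaler0.
have key : forall q : Q, hQ q = 0 -> s *: q = 0.
  move=> q Hq; have Hq' : lc k l (ofv (val q)) = 0 by exact: Hq.
  case: (Hs Hq') => c Hc.
  rewrite -(pi_val q) -linearZ_LR; apply/piK; apply/gen_mk; exists c.
  apply/rowP => i; rewrite mxE -ofvE Hc // /lc summxE; apply: eq_bigr => j _.
  by rewrite !mxE.
move=> t; apply: (@subv_inj _ _ _ P0 PD PZ); rewrite linearZ_LR linear0.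
exact: (key _ (sP t)).
Qed.
End Inner.

Lemma BR1 : Relfin s k l -> u_S_fp_sub_wrt s (generated_by L).
Proof. by case=> m [G [HG Hs]]; exact: (BR1_inner HG Hs). Qed.
End BR1.

Lemma sum_catF p k (a b : nat -> R) (F1 F2 : nat -> nat -> R) i' :
  \sum_(t < p + k) catf p a b t * catf p F1 F2 t i' =
  \sum_(t < p) a t * F1 t i' + \sum_(t < k) b t * F2 t i'.
Proof.
rewrite big_split_ord /=; congr (_ + _); apply: eq_bigr => i _ /=.
  by rewrite /catf ltn_ord.
by rewrite /catf ltnNge leq_addr /= addKn.
Qed.

Lemma BR2 (M : lmodType R) (L : seq M) (s : R) :
  u_S_fp_sub_wrt s (generated_by L) -> Relfin (s * s) (size L) (nth 0 L).
Proof.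
move=> [T1 [F [T2 [a [h [b [[n [pi [Hsurj [Mk HMk]]]] [ainj [Hex [HP [Hb [HT2 [HsT1 HsT2]]]]]]]]]]]]].
set k := size L; set l := nth 0 L.
pose e j := tov n (fun i => ((i == j)%:R : R)).
have [Cf HCf] : exists Cf : nat -> nat -> R, forall j, h (pi (e j)) = lc k l (Cf j).
  apply: (functional_choice (fun j c => h (pi (e j)) = lc k l c)) => j.
  by apply/gen_lc; apply: HP.
have [D HD] : exists D : nat -> 'rV[R]_n, forall i, (i < k)%N -> h (pi (D i)) = s *: l i.
  apply: (choice_imp 0 (P := fun i => (i < k)%N) (Q := fun i d => h (pi d) = s *: l i)) => i Hi.
  have Pl : generated_by L (s *: l i).
    by apply/genZ/gen_lc; exists (fun j => ((j == i)%:R : R)); rewrite lc_delta.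
  have [z Hz] : exists z, h z = s *: l i.
    by case: (Hb _ Pl) => H _; apply: H; rewrite linearZ_LR HsT2.
  by case: (Hsurj z) => d Hd; exists d; rewrite Hd.
pose psi (u : 'rV[R]_n) i := \sum_(j < n) ofv u j * Cf j i.
have hpsi : forall u, lc k l (psi u) = h (pi u).
  move=> u; rewrite lc_sum {2}(row_decomp u) !lc_lin /=.
  by apply: lc_ext_l => j _; rewrite HCf.
have psi_lc : forall p U w i, psi (lc p U w) i = \sum_(t < p) w t * psi (U t) i.
  move=> p U w i; rewrite /psi.
  transitivity (\sum_(j < n) (\sum_(t < p) w t * ofv (U t) j) * Cf j i).
    by apply: eq_bigr => j _; rewrite ofv_lc.
  exact: (sum_swap _ _ w (fun t j => ofv (U t) j) (fun j => Cf j i)).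
have psiZ : forall c u i, psi (c *: u) i = c * psi u i.
  by move=> c u i; rewrite /psi mulr_sumr; apply: eq_bigr => j _; rewrite ofvZ mulrA.
set p := size Mk; set Mkl := nth 0 Mk.
exists (p + k)%N, (catf p (fun t => psi (Mkl t))
                      (fun i i' => psi (D i) i' - s * ((i' == i)%:R : R))); split.
  move=> t Ht; rewrite /catf; case: ifP => Htp.
    rewrite hpsi; have -> : pi (Mkl t) = 0; last by rewrite linear0.
    by apply/HMk/gen_lc; exists (fun j => ((j == t)%:R : R)); rewrite lc_delta.
  have Hi : (t - p < k)%N by move/negbT: Htp; lia.
  by rewrite lcB lcZr lc_delta // hpsi HD // subrr.
move=> r Hr.
set phi := lc k D r.
have hphi : h (pi phi) = 0.
  rewrite /phi !lc_lin /= (lc_ext_l _ (l' := fun i => s *: l i)); last by move=> i Hi; rewrite HD.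
  by rewrite lcZl Hr scaler0.
case: (proj1 (Hex _) hphi) => x Hx.
have : pi (s *: phi) = 0 by rewrite linearZ_LR -Hx -linearZ_LR HsT1 linear0.
move/HMk/gen_lc => [w Hw].
exists (catf p w (fun i => - (s * r i))) => i' Hi'.
rewrite sum_catF.
have E1 : \sum_(t < p) w t * psi (Mkl t) i' = s * \sum_(i < k) r i * psi (D i) i'.
  by rewrite -psi_lc -Hw psiZ /phi psi_lc.
have E2 : \sum_(i < k) - (s * r i) * (psi (D i) i' - s * ((i' == i)%:R : R)) =
          s * s * r i' - s * \sum_(i < k) r i * psi (D i) i'.
  rewrite [in RHS](sum_delta r Hi') !mulr_sumr -sumrB; apply: eq_bigr => i _; ring.
rewrite E1 E2; ring.
Qed.
End Br.


Section Final.
Variable R : comPzRingType.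

Lemma Relfin_ext (M : lmodType R) s k (l l' : nat -> M) :
  (forall i, (i < k)%N -> l i = l' i) -> Relfin s k l -> Relfin s k l'.
Proof.
move=> E H; apply: SF_ext H _ => v.
by rewrite (lc_ext_l _ E).
Qed.

Lemma sfin_of (M : lmodType R) s : S_finite_wrt s M -> SfinM s M.
Proof.
case=> F [[LL HL] HF]; exists (size LL), (nth 0 LL) => x.
by case/HL/gen_lc: (HF x) => c ->; exists c.
Qed.

Lemma coh_of_us (S : R -> Prop) (HS : mult_subset S) (M : lmodType R) :
  u_S_coherent S M -> exists s, S s /\ Coh s M.
Proof.
case=> s [Ss [Hfin Hfp]]; exists (s * s); split; first exact: HS.2.
split; first exact/SfinM_mul/sfin_of.
move=> k l; set LL := mkseq l k.
have H := BR2 (Hfp (generated_by LL) (ex_intro _ LL (fun x => conj id id))).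
move: H; rewrite /LL size_mkseq; apply: Relfin_ext => i Hi.
by rewrite nth_mkseq.
Qed.

Lemma us_of_coh (S : R -> Prop) (M : lmodType R) s : S s -> Coh s M -> u_S_coherent S M.
Proof.
move=> Ss [[m [G HG]] HR]; exists s; split=> //; split.
  exists (generated_by (mkseq G m)); split; first by exists (mkseq G m).
  by move=> x; apply/gen_mk; case: (HG x) => c ->; exists c.
move=> P [LL HL].
have -> : P = generated_by LL.
  by apply: functional_extensionality => x; apply: propositional_extensionality.
exact: BR1.
Qed.
End Final.

Unset Implicit Arguments.
Theorem theorem3p2 (R : comPzRingType) (S : R -> Prop) (M N L : lmodType R)
  (f : {linear M -> N}) (g : {linear N -> L}) :
  mult_subset S -> u_S_exact_short S f g ->
  [/\ (forall (A B : lmodType R) (h : {linear A -> B}),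
          u_S_iso S h -> u_S_coherent S A -> u_S_coherent S B),
      (u_S_coherent S L -> (u_S_coherent S M <-> u_S_coherent S N)),
      (forall (n : nat) (Ms : 'I_n -> lmodType R) (D : lmodType R)
              (inj : forall i, {linear Ms i -> D})
              (proj : forall i, {linear D -> Ms i}),
          is_direct_sum inj proj ->
          (forall i, u_S_coherent S (Ms i)) -> u_S_coherent S D) &
      (u_S_coherent S N -> S_finite S M -> u_S_coherent S L)].
Proof.
move=> HS [[s1 [Ss1 Hf]] [[s2 [Ss2 [Hex1 Hex2]]] [s3 [Ss3 Hg]]]].
have [S1 Smul] := HS.
split.
- move=> A B h [s0 [Ss0 [Hk Hc]]] /(coh_of_us HS) [t [St Ct]].
  apply: (us_of_coh _ (coh_iso Hk Hc Ct)).
  by repeat match goal with |- S (_ * _) => apply Smul end.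
- move=> /(coh_of_us HS) [tL [StL CL]]; split.
    move=> /(coh_of_us HS) [tM [StM CM]].
    apply: (us_of_coh _ (coh_ext Hf Hex1 Hg CM CL)).
    by repeat match goal with |- S (_ * _) => apply Smul end.
  move=> /(coh_of_us HS) [tN [StN CN]].
  apply: (us_of_coh _ (coh_sub Hf Hex1 Hex2 CN CL)).
  by repeat match goal with |- S (_ * _) => apply Smul end.
- move=> n Ms D inj proj [_ [_ Hsum]] HC.
  have [t Ht] : exists t : 'I_n -> R, forall i, S (t i) /\ Coh (t i) (Ms i).
    apply: (functional_choice (fun i s => S s /\ Coh s (Ms i))) => i.
    exact: (coh_of_us HS (HC i)).
  apply: (us_of_coh _ (coh_dsum Hsum (fun i => proj2 (Ht i)))).
  by apply: big_ind => // i _; exact: (proj1 (Ht i)).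
- move=> /(coh_of_us HS) [tN [StN CN]] [u [Su Hu]].
  apply: (us_of_coh _ (coh_quot Hex1 Hex2 Hg CN (sfin_of Hu))).
  by repeat match goal with |- S (_ * _) => apply Smul end.
Qed.
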